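(* Let $R$ be a quotient root system with base $S$ and let $\Phi \subseteq R^+$ be co-closed. Then $\mathrm{span}_{\mathbb{Z}} \Phi = \mathrm{span}_{\mathbb{Z}} \operatorname{supp} \Phi$.
   Context: A quotient root system (QRS) $R$ is the set of non-zero images of a root system $\Delta$ (with base $\Sigma$) under the orthogonal projection of its ambient Euclidean space onto $(\mathrm{span}\,J)^\perp$ for some $J\subsetneq\Sigma$; its base $S$ consists of the images of $\Sigma\setminus J$, and every root is an integer combination of $S$ with all coefficients $\ge0$ (positive roots, $R^+$) or all $\le0$. The support of a root $\alpha$ is the set of $\theta\in S$ with non-zero coefficient in $\alpha$; $\operatorname{supp}\Phi$ is the union of the supports of the elements of $\Phi$. A subset $\Phi\subseteq R^+$ is co-closed if its complement $\Phi^c=R^+\setminus\Phi$ is closed, i.e. $\alpha,\beta\in\Phi^c$ and $\alpha+\beta\in R$ imply $\alpha+\beta\in\Phi^c$. *)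

(* Defs.v *)
From HB Require Import structures.
From mathcomp Require Import all_boot all_order all_algebra.
From mathcomp Require Import reals.
Set Implicit Arguments. Unset Strict Implicit. Unset Printing Implicit Defensive.
Import Order.TTheory GRing.Theory Num.Theory.
Local Open Scope ring_scope.

Section QRS.
Variables (R : realType) (n : nat).
Notation V := 'rV[R]_n.

Definition dot (u v : V) : R := (u *m v^T) 0 0.

Definition refl (a v : V) : V := v - (2 * dot v a / dot a a) *: a.

Definition is_intR (x : R) : Prop := exists z : int, x = z%:~R.

(* a (reduced, crystallographic, finite) root system: the list D of roots *)
Definition is_root_system (D : seq V) : Prop :=
  [/\ (0 : V) \notin D,
      (forall a b, a \in D -> b \in D -> refl a b \in D),
      (forall a b, a \in D -> b \in D -> is_intR (2 * dot b a / dot a a)) &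
      (forall a (c : R), a \in D -> c *: a \in D -> c = 1 \/ c = -1)].

Definition lin_indep (B : seq V) : Prop :=
  uniq B /\ forall c : V -> R, \sum_(s <- B) c s *: s = 0 -> forall s, s \in B -> c s = 0.

Definition nonneg_int_comb (B : seq V) (v : V) : Prop :=
  exists c : V -> int, v = \sum_(s <- B) (c s)%:~R *: s /\ forall s, s \in B -> (0 <= c s)%R.

Definition is_base (D Sig : seq V) : Prop :=
  [/\ {subset Sig <= D}, lin_indep Sig &
      forall a, a \in D -> nonneg_int_comb Sig a \/ nonneg_int_comb Sig (- a)].

Definition is_orth_proj_perp (J : seq V) (P : V -> V) : Prop :=
  forall v, (forall j, j \in J -> dot (P v) j = 0) /\
            exists c : V -> R, v - P v = \sum_(j <- J) c j *: j.

Definition qroot (D : seq V) (P : V -> V) (x : V) : Prop :=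
  x != 0 /\ exists2 a, a \in D & P a = x.

Definition qbase (Sig J : seq V) (P : V -> V) : seq V :=
  [seq P s | s <- Sig & s \notin J].

Definition qpos (D Sig J : seq V) (P : V -> V) (x : V) : Prop :=
  qroot D P x /\ nonneg_int_comb (qbase Sig J P) x.

Definition supp (S : seq V) (x : V) (t : V) : Prop :=
  t \in S /\ exists c : V -> int, x = \sum_(s <- S) (c s)%:~R *: s /\ c t != 0.

Definition suppset (S : seq V) (Phi : V -> Prop) (t : V) : Prop :=
  exists2 x, Phi x & supp S x t.

Definition co_closed (D Sig J : seq V) (P : V -> V) (Phi : V -> Prop) : Prop :=
  forall a b, qpos D Sig J P a -> ~ Phi a -> qpos D Sig J P b -> ~ Phi b ->
    qroot D P (a + b) -> qpos D Sig J P (a + b) /\ ~ Phi (a + b).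

Definition zspan (X : V -> Prop) (v : V) : Prop :=
  exists s : seq (V * int), (forall p, p \in s -> X p.1) /\
    v = \sum_(p <- s) (p.2)%:~R *: p.1.

End QRS.

(* Main.v *)
Require Import Defs.
From HB Require Import structures.
From mathcomp Require Import all_boot all_order all_algebra.
From mathcomp Require Import reals.
From mathcomp Require Import boolp.
From mathcomp Require Import zify ring lra.
Set Implicit Arguments. Unset Strict Implicit. Unset Printing Implicit Defensive.
Import Order.TTheory GRing.Theory Num.Theory.
Local Open Scope ring_scope.

Module A.

Section Dot.
Variables (R : realType) (n : nat).
Notation V := 'rV[R]_n.
Implicit Types u v w : V.

Lemma dotE u v : dot u v = \sum_i u 0 i * v 0 i.
Proof. by rewrite /dot !mxE; apply: eq_bigr => i _; rewrite mxE. Qed.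

Lemma dotC u v : dot u v = dot v u.
Proof. by rewrite !dotE; apply: eq_bigr => i _; rewrite mulrC. Qed.

Lemma dotDl u v w : dot (u + v) w = dot u w + dot v w.
Proof. by rewrite !dotE -big_split; apply: eq_bigr => i _; rewrite mxE mulrDl. Qed.

Lemma dotZl (a : R) u v : dot (a *: u) v = a * dot u v.
Proof. by rewrite !dotE mulr_sumr; apply: eq_bigr => i _; rewrite mxE mulrA. Qed.

Lemma dotDr u v w : dot u (v + w) = dot u v + dot u w.
Proof. by rewrite dotC dotDl !(dotC u). Qed.

Lemma dotZr (a : R) u v : dot u (a *: v) = a * dot u v.
Proof. by rewrite dotC dotZl dotC. Qed.

Lemma dotNl u v : dot (- u) v = - dot u v.
Proof. by rewrite -scaleN1r dotZl mulN1r. Qed.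
Lemma dotNr u v : dot u (- v) = - dot u v.
Proof. by rewrite -scaleN1r dotZr mulN1r. Qed.
Lemma dotBl u v w : dot (u - v) w = dot u w - dot v w.
Proof. by rewrite dotDl dotNl. Qed.
Lemma dotBr u v w : dot u (v - w) = dot u v - dot u w.
Proof. by rewrite dotDr dotNr. Qed.

Lemma dot_ge0 u : 0 <= dot u u.
Proof. rewrite dotE; apply: sumr_ge0 => i _; exact: sqr_ge0. Qed.

Lemma dot_eq0 u : (dot u u == 0) = (u == 0).
Proof.
apply/idP/idP; last by move/eqP->; rewrite dotE big1 // => i _; rewrite mxE mul0r.
rewrite dotE psumr_eq0; last by move=> i _; exact: sqr_ge0.
move=> /allP H; apply/eqP/rowP => i; rewrite mxE.
have := H i (mem_index_enum _); rewrite /= mulf_eq0 orbb => /eqP //.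
Qed.

Lemma dot_gt0 u : u != 0 -> 0 < dot u u.
Proof. by move=> nz; rewrite lt_def dot_ge0 andbT dot_eq0. Qed.

Lemma dot_suml (I : Type) (s : seq I) (F : I -> V) v :
  dot (\sum_(i <- s) F i) v = \sum_(i <- s) dot (F i) v.
Proof.
elim: s => [|a s IH]; first by rewrite !big_nil dotE big1 // => i _; rewrite mxE mul0r.
by rewrite !big_cons dotDl IH.
Qed.

End Dot.

End A.
Import A.

Module B.

Section Root.
Variables (R : realType) (n : nat).
Notation V := 'rV[R]_n.
Implicit Types u v w x y z : V.
Variables (D Sig : seq V).
Hypothesis HD : is_root_system D.

Lemma D_nz x : x \in D -> x != 0.
Proof. by case: HD => H0 _ _ _ xD; apply: contraNneq H0 => <-. Qed.

Lemma refl_in a b : a \in D -> b \in D -> refl a b \in D.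
Proof. by case: HD => _ H _ _; apply: H. Qed.

Lemma neg_in a : a \in D -> - a \in D.
Proof.
move=> aD; have := refl_in aD aD; rewrite /refl.
have nz : dot a a != 0 by rewrite dot_eq0 D_nz.
rewrite mulfK // (_ : a - 2 *: a = - a) //.
by rewrite scalerDl scale1r opprD addrA subrr sub0r.
Qed.

Lemma fact2 x s : x \in D -> s \in D -> 0 < dot x s -> x != s -> x - s \in D.
Proof.
move=> xD sD hxs nxs.
have Ax : 0 < dot x x by apply: dot_gt0; apply: D_nz.
have As : 0 < dot s s by apply: dot_gt0; apply: D_nz.
case: HD => _ _ Hint Hred.
have [zp hp] := Hint s x sD xD.
have [zq hq] := Hint x s xD sD.
have hp' : zp%:~R * dot s s = 2 * dot x s by rewrite -hp mulfVK // gt_eqF.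
have hq' : zq%:~R * dot x x = 2 * dot x s by rewrite -hq mulfVK ?(dotC s) // gt_eqF.
have zp0 : 0 < zp by rewrite -(ltr0z R) -hp divr_gt0 // mulr_gt0.
have zq0 : 0 < zq by rewrite -(ltr0z R) -hq divr_gt0 // ?mulr_gt0 // dotC.
have [zp1|zp1] := eqVneq zp 1.
  have := refl_in sD xD; rewrite /refl hp zp1 scale1r //.
have [zq1|zq1] := eqVneq zq 1.
  have := refl_in xD sD; rewrite /refl hq zq1 scale1r => /neg_in.
  by rewrite opprB.
exfalso.
have h4 : 4 <= zp * zq by lia.
have h4' : 4 <= zp%:~R * zq%:~R :> R by rewrite -intrM (ler_int R 4).
set A := dot x x in Ax hq' *; set B := dot s s in As hp' *; set C := dot x s in hp' hq' *.
have CS : A * B <= C * C by nra.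
set w := B *: x - C *: s.
have ww : dot w w = B * (A * B - C * C).
  rewrite /w !(dotBl, dotBr, dotZl, dotZr) -/A -/B -/C (dotC s x) -/C; ring.
have : w == 0.
  rewrite -dot_eq0 eq_le dot_ge0 andbT ww.
  by rewrite pmulr_rle0 // subr_le0.
rewrite subr_eq0 => /eqP hw.
have xe : x = (C / B) *: s by rewrite mulrC -scalerA -hw scalerA mulVf ?scale1r // gt_eqF.
have := Hred s (C / B) sD; rewrite -xe => /(_ xD) [h1|h1].
  by move: nxs; rewrite xe h1 scale1r eqxx.
have : 0 < C / B by rewrite divr_gt0.
by rewrite h1 ltr0N1.
Qed.

End Root.

End B.
Import B.

Module C.

Section Base.
Variables (R : realType) (n : nat).
Notation V := 'rV[R]_n.
Implicit Types u v w x y z : V.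
Variables (D Sig : seq V).
Hypothesis HD : is_root_system D.
Hypothesis HB : is_base D Sig.

Definition comb (c : V -> int) : V := \sum_(s <- Sig) (c s)%:~R *: s.
Definition ht (P : pred V) (c : V -> int) : int := \sum_(t <- Sig | P t) c t.
Definition dlt (s : V) : V -> int := fun t => (t == s)%:Z.
Definition nonneg (c : V -> int) := forall s, s \in Sig -> 0 <= c s.

Lemma Sig_uniq : uniq Sig. Proof. by case: HB => _ [] . Qed.
Lemma Sig_D s : s \in Sig -> s \in D. Proof. by case: HB => H _ _; apply: H. Qed.

Lemma combB c1 c2 : comb (fun t => c1 t - c2 t) = comb c1 - comb c2.
Proof. by rewrite /comb -sumrB; apply: eq_bigr => t _; rewrite intrB scalerBl. Qed.

Lemma combD c1 c2 : comb (fun t => c1 t + c2 t) = comb c1 + comb c2.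
Proof. by rewrite /comb -big_split; apply: eq_bigr => t _; rewrite intrD scalerDl. Qed.

Lemma combN c : comb (fun t => - c t) = - comb c.
Proof. by rewrite /comb -sumrN; apply: eq_bigr => t _; rewrite intrN scaleNr. Qed.

Lemma combM m c : comb (fun t => m * c t) = m%:~R *: comb c.
Proof. by rewrite /comb scaler_sumr; apply: eq_bigr => t _; rewrite intrM scalerA. Qed.

Lemma comb_eq0 c : comb c = 0 -> forall s, s \in Sig -> c s = 0.
Proof.
case: HB => _ [_ Hi] _ H s sS.
by have /eqP := Hi (fun t => (c t)%:~R) H s sS; rewrite (eqr_int R (c s) 0) => /eqP.
Qed.

Lemma comb_eq c1 c2 : comb c1 = comb c2 -> forall s, s \in Sig -> c1 s = c2 s.
Proof.
move=> h s sS; apply/eqP; rewrite -subr_eq0; apply/eqP.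
by apply: (comb_eq0 (c := fun t => c1 t - c2 t)) => //; rewrite combB h subrr.
Qed.

Lemma sum_dltP (P : pred V) s m : s \in Sig ->
  \sum_(t <- Sig | P t) m * dlt s t = if P s then m else 0.
Proof.
move=> sS; rewrite big_mkcond (bigD1_seq s) //= ?Sig_uniq // big1 ?addr0.
  by rewrite /dlt eqxx mulr1.
by move=> t /negbTE; rewrite /dlt => ->; rewrite mulr0 if_same.
Qed.

Lemma comb_dlt s : s \in Sig -> comb (dlt s) = s.
Proof.
move=> sS; rewrite /comb (bigD1_seq s) //= ?Sig_uniq // big1 ?addr0.
  by rewrite /dlt eqxx scale1r.
by move=> t /negbTE; rewrite /dlt => ->; rewrite scale0r.
Qed.

Lemma ht_dlt P c s m : s \in Sig ->
  ht P (fun t => c t - m * dlt s t) = ht P c - (if P s then m else 0).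
Proof. by move=> sS; rewrite /ht sumrB sum_dltP. Qed.

Lemma ht_eq P c1 c2 : (forall s, s \in Sig -> c1 s = c2 s) -> ht P c1 = ht P c2.
Proof. move=> h; rewrite /ht !(big_mkcond P); apply: eq_big_seq => t tS /=; by rewrite h. Qed.

Lemma ht_ge0 P c : nonneg c -> 0 <= ht P c.
Proof. move=> h; rewrite /ht big_seq_cond; apply: sumr_ge0 => t /andP[tS _]; exact: h. Qed.

Lemma ht_le P c : nonneg c -> ht P c <= ht predT c.
Proof.
move=> h; rewrite /ht (bigID P predT) /= lerDl big_seq_cond.
by apply: sumr_ge0 => t /andP[tS _]; exact: h.
Qed.



Lemma ht_pos_gen (T : realDomainType) (l : seq V) P (c : V -> T) : 0 < \sum_(t <- l | P t) c t ->
  exists2 t, t \in l & P t && (0 < c t).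
Proof.
elim: l => [|a l IH]; first by rewrite big_nil ltxx.
rewrite big_cons; case Pa: (P a).
  have [ca|ca] := ltP 0 (c a); first by exists a; rewrite ?mem_head ?Pa.
  move=> h; have [|t tl Pt] := IH; first by lra.
  by exists t; rewrite // inE tl orbT.
by move=> /IH [t tl Pt]; exists t; rewrite // inE tl orbT.
Qed.

Lemma ht_pos P c : 0 < ht P c -> exists2 t, t \in Sig & P t && (0 < c t).
Proof. exact: ht_pos_gen. Qed.

Lemma pos_of_D x : x \in D -> exists c, x = comb c /\ (nonneg c \/ nonneg (fun t => - c t)).
Proof.
case: HB => _ _ H /H [[c [hc hp]]|[c [hc hp]]].
  by exists c; split => //; left.
exists (fun t => - c t); split; last by right => s /hp; rewrite opprK.
by rewrite combN /comb -hc opprK.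
Qed.

Lemma pos_sign x e t : x \in D -> x = comb e -> t \in Sig -> 0 < e t -> nonneg e.
Proof.
move=> /pos_of_D [c [hc [hp|hp]]] he tS et; have hce : comb e = comb c by rewrite -he.
  by move=> s sS; rewrite (comb_eq hce sS); apply: hp.
exfalso; have := hp t tS; rewrite /= -(comb_eq hce tS); lia.
Qed.

Lemma dot_comb x c : dot x (comb c) = \sum_(s <- Sig) (c s)%:~R * dot x s.
Proof. by rewrite dotC /comb dot_suml; apply: eq_bigr => s _; rewrite dotZl dotC. Qed.

Lemma exists_pos_dot x c : x \in D -> x = comb c -> nonneg c ->
  exists2 s, s \in Sig & (0 < c s) && (0 < dot x s).
Proof.
move=> xD hc hp.
have : 0 < dot x x by apply: dot_gt0; apply: D_nz xD.
rewrite {2}hc dot_comb => h.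
have [s sS /andP[_ hs]] := ht_pos_gen (P := predT) h.
exists s => //; have := hp s sS; rewrite le_eqVlt => /orP[/eqP c0|c0].
  by exfalso; move: hs; rewrite -c0 mulr0z mul0r ltxx.
by rewrite c0 /=; move: hs; rewrite pmulr_rgt0 // ltr0z.
Qed.

End Base.

End C.
Import C.

Module Dd.

Section Decomp.
Variables (R : realType) (n : nat).
Notation V := 'rV[R]_n.
Implicit Types u v w x y z : V.
Variables (D Sig : seq V).
Hypothesis HD : is_root_system D.
Hypothesis HB : is_base D Sig.

Notation comb := (comb Sig).
Notation ht := (ht Sig).
Notation nonneg := (nonneg Sig).

Definition posk (k : pred V) v c := [/\ v \in D, v = comb c, nonneg c & 1 <= ht k c].

Lemma int_refl s y : s \in D -> y \in D -> exists m : int, 2 * dot y s / dot s s = m%:~R.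
Proof. by case: HD => _ _ H _ sD yD; apply: H. Qed.

Lemma refl_comb s y cy m : s \in Sig -> y = comb cy -> 2 * dot y s / dot s s = m%:~R ->
  refl s y = comb (fun t => cy t - m * dlt s t).
Proof.
move=> sS hy hm; by rewrite combB combM (comb_dlt HB sS) /refl hm -hy.
Qed.

Lemma refl_add s u v : refl s (u + v) = refl s u + refl s v.
Proof.
rewrite /refl dotDl mulrDr mulrDl scalerDl.
by rewrite opprD addrACA.
Qed.

Lemma refl_inv s x : dot s s != 0 -> refl s (refl s x) = x.
Proof.
move=> nz; rewrite {1}/refl dotBl dotZl.
set m := 2 * dot x s / dot s s.
have -> : 2 * (dot x s - m * dot s s) / dot s s = - m.
  by rewrite /m; field.
by rewrite /refl -/m scaleNr opprK subrK.
Qed.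

Lemma refl_posk k s y cy : s \in Sig -> ~~ k s -> posk k y cy ->
  exists m : int, 2 * dot y s / dot s s = m%:~R /\
    posk k (refl s y) (fun t => cy t - m * dlt s t).
Proof.
move=> sS nks [yD hy hp hk].
have [m hm] := int_refl (Sig_D HB sS) yD.
exists m; split => //.
have hk' : ht k (fun t => cy t - m * dlt s t) = ht k cy by rewrite (ht_dlt HB) // (negbTE nks) subr0.
have rD : refl s y \in D by apply: refl_in => //; exact: (Sig_D HB sS).
have hr : refl s y = comb (fun t => cy t - m * dlt s t) by apply: refl_comb.
split => //; last by rewrite hk'.
have hpos : 0 < ht k cy by lia.
have [t tS /andP[kt ct]] := ht_pos hpos.
apply: (pos_sign HB rD hr tS).
have ts : t != s by apply: contraNneq nks => <-.
by rewrite /dlt (negbTE ts) mulr0 subr0.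
Qed.

Lemma ht_dlt1 P s : s \in Sig -> ht P (dlt s) = if P s then 1 else 0.
Proof.
move=> sS; rewrite -(sum_dltP HB P 1 sS) /ht; apply: eq_bigr => t _; by rewrite mul1r.
Qed.

Lemma nonneg_dlt s : nonneg (dlt s).
Proof. by move=> t _; rewrite /dlt. Qed.

Lemma posk_dlt (k : pred V) s : s \in Sig -> k s -> posk k s (dlt s).
Proof.
move=> sS ks; split; first exact: (Sig_D HB sS).
- by rewrite (comb_dlt HB sS).
- exact: nonneg_dlt.
- by rewrite ht_dlt1 // ks.
Qed.

Lemma decomp (k : pred V) N : forall x c, x \in D -> x = comb c -> nonneg c ->
  ht predT c <= N%:Z -> 2 <= ht k c ->
  exists y cy z cz, [/\ posk k y cy, posk k z cz & x = y + z].
Proof.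
elim: N => [|N IH] x c xD hx hp hN h2.
  have := ht_le k hp; lia.
have [s sS /andP[cs xs]] := exists_pos_dot (Sig:=Sig) HD xD hx hp.
have sD := Sig_D HB sS.
case ks: (k s).
  have xns : x != s.
    apply/eqP => exs.
    have hce : comb c = comb (dlt s) by rewrite -hx exs (comb_dlt HB sS).
    have := ht_eq k (comb_eq HB hce); rewrite ht_dlt1 // ks; lia.
  exists (x - s), (fun t => c t - 1 * dlt s t), s, (dlt s).
  split; last by rewrite subrK.
  - split.
    + exact: (fact2 HD xD sD xs xns).
    + by rewrite combB combM (comb_dlt HB sS) -hx scale1r.
    + move=> t tS; have := hp t tS; rewrite /dlt; case: eqP => [->|_] /=; lia.
    + rewrite (ht_dlt HB) // ks; lia.
  - exact: posk_dlt.
have nks : ~~ k s by rewrite ks.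
have hpk : posk k x c by split => //; lia.
have [m [hm [rD hr hrp hrk]]] := refl_posk sS nks hpk.
have m0 : 0 < m.
  rewrite -(ltr0z R) -hm divr_gt0 // ?mulr_gt0 //; apply: dot_gt0; exact: (D_nz HD sD).
have hN' : ht predT (fun t => c t - m * dlt s t) <= N%:Z.
  rewrite (ht_dlt HB) //=; lia.
have h2' : 2 <= ht k (fun t => c t - m * dlt s t).
  by rewrite (ht_dlt HB) // ks subr0.
have [y [cy [z [cz [py pz e]]]]] := IH _ _ rD hr hrp hN' h2'.
have [my [_ py']] := refl_posk sS nks py.
have [mz [_ pz']] := refl_posk sS nks pz.
exists (refl s y), (fun t => cy t - my * dlt s t), (refl s z), (fun t => cz t - mz * dlt s t); split; [exact: py' | exact: pz' |].
rewrite -refl_add -e refl_inv //; apply: lt0r_neq0; apply: dot_gt0; exact: (D_nz HD sD).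
Qed.

End Decomp.

End Dd.
Import Dd.

Module E.

Section Zspan.
Variables (R : realType) (n : nat).
Notation V := 'rV[R]_n.
Implicit Types u v w x y z : V.

Lemma zspan_in (X : V -> Prop) v : X v -> zspan X v.
Proof. by move=> Xv; exists [:: (v, 1)]; split; [move=> p; rewrite inE => /eqP -> | rewrite big_seq1 scale1r]. Qed.

Lemma zspan0 (X : V -> Prop) : zspan X 0.
Proof. by exists [::]; rewrite big_nil. Qed.

Lemma zspanD (X : V -> Prop) u v : zspan X u -> zspan X v -> zspan X (u + v).
Proof.
move=> [s1 [h1 ->]] [s2 [h2 ->]]; exists (s1 ++ s2); split; last by rewrite big_cat.
by move=> p; rewrite mem_cat => /orP[/h1|/h2].
Qed.

Lemma zspanZ (X : V -> Prop) (m : int) u : zspan X u -> zspan X (m%:~R *: u).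
Proof.
move=> [s [h ->]]; exists [seq (p.1, m * p.2) | p <- s]; split.
  by move=> p /mapP [q qs ->] /=; apply: h.
by rewrite big_map scaler_sumr; apply: eq_bigr => p _; rewrite intrM scalerA.
Qed.

Lemma zspanN (X : V -> Prop) u : zspan X u -> zspan X (- u).
Proof. by move=> /(zspanZ (-1)); rewrite scaleN1r. Qed.

Lemma zspanB (X : V -> Prop) u v : zspan X u -> zspan X v -> zspan X (u - v).
Proof. by move=> hu /zspanN; apply: zspanD. Qed.

Lemma zspan_sum (X : V -> Prop) (I : eqType) (l : seq I) (F : I -> V) :
  (forall i, i \in l -> zspan X (F i)) -> zspan X (\sum_(i <- l) F i).
Proof.
elim: l => [|a l IH] h; first by rewrite big_nil; apply: zspan0.
rewrite big_cons; apply: zspanD; first by apply: h; rewrite mem_head.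
by apply: IH => i hi; apply: h; rewrite inE hi orbT.
Qed.

Lemma zspan_mono (X Y : V -> Prop) v : (forall u, X u -> zspan Y u) -> zspan X v -> zspan Y v.
Proof.
move=> hXY [s [h ->]]; apply: zspan_sum => p ps.
by apply: zspanZ; apply: hXY; apply: h.
Qed.

End Zspan.

End E.
Import E.

Module F.

Section Proj.
Variables (R : realType) (n : nat).
Notation V := 'rV[R]_n.
Implicit Types u v w x y z : V.
Variables (J : seq V) (P : V -> V).
Hypothesis HP : is_orth_proj_perp J P.

Lemma perp_span w (d : V -> R) : (forall j, j \in J -> dot w j = 0) ->
  dot w (\sum_(j <- J) d j *: j) = 0.
Proof.
move=> h; rewrite dotC dot_suml big_seq big1 // => j jJ.
by rewrite dotZl dotC h // mulr0.
Qed.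

Lemma perp_span0 w (d : V -> R) : (forall j, j \in J -> dot w j = 0) ->
  w = \sum_(j <- J) d j *: j -> w = 0.
Proof.
move=> h hw; apply/eqP; rewrite -dot_eq0; apply/eqP.
by rewrite {2}hw; apply: perp_span.
Qed.

Lemma Pdecomp v : exists d : V -> R, P v = v - \sum_(j <- J) d j *: j.
Proof.
have [_ [d hd]] := HP v; exists d; rewrite -hd.
by apply/rowP => i; rewrite !mxE; ring.
Qed.

Lemma P_perp v j : j \in J -> dot (P v) j = 0.
Proof. by have [h _] := HP v; apply: h. Qed.

Lemma P_add u v : P (u + v) = P u + P v.
Proof.
have [du hu] := Pdecomp u; have [dv hv] := Pdecomp v; have [duv huv] := Pdecomp (u + v).
apply/eqP; rewrite -subr_eq0; apply/eqP.
apply: (perp_span0 (d := fun j => du j + dv j - duv j)).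
  by move=> j jJ; rewrite dotBl dotDl !P_perp //; ring.
have -> : \sum_(j <- J) (du j + dv j - duv j) *: j =
   \sum_(j <- J) du j *: j + \sum_(j <- J) dv j *: j - \sum_(j <- J) duv j *: j.
  by rewrite -big_split -sumrB; apply: eq_bigr => j _; rewrite scalerBl scalerDl.
rewrite hu hv huv; apply/rowP => i; rewrite !mxE; ring.
Qed.

Lemma P0 : P 0 = 0.
Proof. have h := P_add 0 0; rewrite addr0 in h; by apply: (addrI (P 0)); rewrite addr0 -h. Qed.

Lemma P_scale (a : R) v : P (a *: v) = a *: P v.
Proof.
have [dv hv] := Pdecomp v; have [da ha] := Pdecomp (a *: v).
apply/eqP; rewrite -subr_eq0; apply/eqP.
apply: (perp_span0 (d := fun j => a * dv j - da j)).
  by move=> j jJ; rewrite dotBl dotZl !P_perp //; ring.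
have -> : \sum_(j <- J) (a * dv j - da j) *: j =
   a *: \sum_(j <- J) dv j *: j - \sum_(j <- J) da j *: j.
  by rewrite scaler_sumr -sumrB; apply: eq_bigr => j _; rewrite scalerBl scalerA.
rewrite hv ha; apply/rowP => i; rewrite !mxE; ring.
Qed.

Lemma P_sum (I : Type) (l : seq I) (F : I -> V) : P (\sum_(i <- l) F i) = \sum_(i <- l) P (F i).
Proof.
elim: l => [|a l IH]; first by rewrite !big_nil P0.
by rewrite !big_cons P_add IH.
Qed.

Lemma P_J j : j \in J -> P j = 0.
Proof.
move=> jJ; have [d hd] := Pdecomp j.
apply/eqP; rewrite -dot_eq0; apply/eqP.
rewrite {2}hd dotBr P_perp // sub0r.
by rewrite perp_span ?oppr0 // => j' /P_perp.
Qed.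

End Proj.

End F.
Import F.

Module G.

Section Q.
Variables (R : realType) (n : nat).
Notation V := 'rV[R]_n.
Implicit Types u v w x y z : V.
Variables (D Sig J : seq V) (P : V -> V).
Hypothesis HD : is_root_system D.
Hypothesis HB : is_base D Sig.
Hypothesis HJ : {subset J <= Sig}.
Hypothesis HP : is_orth_proj_perp J P.

Notation comb := (comb Sig).

Lemma sum_pick (T : zmodType) (Fn : V -> T) (Q : pred V) s0 : s0 \in Sig -> Q s0 ->
  \sum_(s <- Sig | Q s) (if s == s0 then Fn s else 0) = Fn s0.
Proof.
move=> sS q; rewrite big_mkcond (bigD1_seq s0) //= ?(Sig_uniq HB) // q eqxx big1 ?addr0 //.
by move=> t /negbTE ->; rewrite if_same.
Qed.

Lemma regroup (F : V -> V) : \sum_(j <- J) F j = \sum_(t <- Sig) \sum_(j <- J | j == t) F j.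
Proof.
have : {subset J <= Sig} := HJ; elim: J => [|a l IH] hJ.
  by rewrite big_nil big1 // => t _; rewrite big_nil.
rewrite big_cons IH; last by move=> j jl; apply: hJ; rewrite inE jl orbT.
have aS : a \in Sig by apply: hJ; rewrite mem_head.
rewrite -(@sum_pick _ (fun=> F a) predT a aS isT).
rewrite -big_split /=; apply: eq_bigr => t _; rewrite big_cons (eq_sym a t).
by case: (t == a); rewrite ?add0r.
Qed.

Lemma P_comb c : P (comb c) = \sum_(s <- Sig | s \notin J) (c s)%:~R *: P s.
Proof.
rewrite /C.comb (P_sum HP) [RHS]big_mkcond; apply: eq_bigr => s _.
rewrite (P_scale HP); case: ifP => // /negbFE sJ.
by rewrite (P_J HP sJ) scaler0.
Qed.

Lemma LIq (e : V -> R) : \sum_(s <- Sig | s \notin J) e s *: P s = 0 ->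
  forall s, s \in Sig -> s \notin J -> e s = 0.
Proof.
move=> h.
set w := \sum_(s <- Sig) (if s \notin J then e s else 0) *: s.
have Pw : P w = 0.
  rewrite -h /w (P_sum HP) [RHS]big_mkcond; apply: eq_bigr => s _.
  by rewrite (P_scale HP); case: ifP; rewrite ?scale0r.
have [d hd] := Pdecomp HP w.
have hw : w = \sum_(t <- Sig) (\sum_(j <- J | j == t) d j) *: t.
  move/eqP: hd; rewrite Pw eq_sym subr_eq0 => /eqP ->.
  rewrite regroup; apply: eq_bigr => t _; rewrite scaler_suml.
  by apply: eq_bigr => j /eqP ->.
case: HB => _ [_ Hi] _.
have := Hi (fun t => (if t \notin J then e t else 0) - \sum_(j <- J | j == t) d j).
move=> H s sS sJ; have := H _ s sS.
rewrite sJ.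
have -> : \sum_(j <- J | j == s) d j = 0.
  rewrite big_seq_cond big1 // => j /andP[jJ /eqP js]; move: sJ; rewrite -js jJ //.
rewrite subr0; apply.
have -> : \sum_(t <- Sig) ((if t \notin J then e t else 0) - \sum_(j <- J | j == t) d j) *: t
   = w - \sum_(t <- Sig) (\sum_(j <- J | j == t) d j) *: t.
  by rewrite /w -sumrB; apply: eq_bigr => t _; rewrite scalerBl.
by rewrite -hw subrr.
Qed.

End Q.

End G.
Import G.

Module H.

Section Q2.
Variables (R : realType) (n : nat).
Notation V := 'rV[R]_n.
Implicit Types u v w x y z : V.
Variables (D Sig J : seq V) (P : V -> V).
Hypothesis HD : is_root_system D.
Hypothesis HB : is_base D Sig.
Hypothesis HJ : {subset J <= Sig}.
Hypothesis HP : is_orth_proj_perp J P.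

Notation comb := (comb Sig).
Notation qb := (qbase Sig J P).

Lemma qbase_sum (G : V -> V) : \sum_(t <- qb) G t = \sum_(s <- Sig | s \notin J) G (P s).
Proof. by rewrite /qbase big_map big_filter. Qed.


Lemma P_inj s1 s2 : s1 \in Sig -> s1 \notin J -> s2 \in Sig -> s2 \notin J -> P s1 = P s2 -> s1 = s2.
Proof.
move=> s1S s1J s2S s2J e; apply/eqP; apply/negPn/negP => ne.
have := LIq HB HJ HP (e := fun s => (s == s1)%:R - (s == s2)%:R).
have -> : \sum_(s <- Sig | s \notin J) ((s == s1)%:R - (s == s2)%:R) *: P s = P s1 - P s2.
  rewrite -(sum_pick HB (fun s => P s) (Q := fun s => s \notin J) s1S s1J) -(sum_pick HB (fun s => P s) (Q := fun s => s \notin J) s2S s2J) -sumrB.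
  by apply: eq_bigr => s _; rewrite scalerBl; case: (s == s1); case: (s == s2); rewrite ?scale1r ?scale0r.
rewrite e subrr => /(_ erefl s1 s1S s1J); rewrite eqxx (negbTE ne) subr0 => /eqP.
by rewrite oner_eq0.
Qed.

Lemma coef_match x c (c' : V -> int) : x = P (comb c) -> x = \sum_(t <- qb) (c' t)%:~R *: t ->
  forall s, s \in Sig -> s \notin J -> c s = c' (P s).
Proof.
move=> h1 h2 s sS sJ.
have H := LIq HB HJ HP (e := fun s => (c s)%:~R - (c' (P s))%:~R).
have E : \sum_(s <- Sig | s \notin J) ((c s)%:~R - (c' (P s))%:~R) *: P s = 0.
  under eq_bigr do rewrite scalerBl.
  by rewrite sumrB -(qbase_sum (fun t => (c' t)%:~R *: t)) -h2 -(P_comb Sig HP) -h1 subrr.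
by have /eqP := H E s sS sJ; rewrite subr_eq0 eqr_int => /eqP.
Qed.

Lemma qpos_P y c : y \in D -> y = comb c -> nonneg Sig c -> P y != 0 ->
  qpos D Sig J P (P y).
Proof.
move=> yD hy hp nz; split; first by split => //; exists y.
exists (fun t => \sum_(s <- Sig | (s \notin J) && (P s == t)) c s); split; last first.
  move=> t _; rewrite big_seq_cond; apply: sumr_ge0 => s /andP[sS _]; exact: hp.
rewrite qbase_sum hy (P_comb Sig HP) big_seq_cond [RHS]big_seq_cond.
apply: eq_bigr => s /andP[sS sJ]; congr (_ *: _); congr (_%:~R).
rewrite big_mkcond (bigD1_seq s) //= ?(Sig_uniq HB) // sJ eqxx /= big1_seq ?addr0 //.
move=> s' /andP[ns' s'S]; case: ifP => // /andP[s'J /eqP e].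
by move: ns'; rewrite (P_inj s'S s'J sS sJ e) eqxx.
Qed.

End Q2.

End H.
Import H.

Module I.

Lemma extract (R : realType) (n : nat) (l : seq 'rV[R]_n) (c : 'rV[R]_n -> int) (kk : pred 'rV[R]_n) :
  (forall s, s \in l -> 0 <= c s) -> \sum_(s <- l | kk s) c s = 1 ->
  exists t, kk t /\ \sum_(s <- l | kk s) (c s)%:~R *: s = t.
Proof.
elim: l => [|a l IH] hp; first by rewrite big_nil.
have hp' : forall s, s \in l -> 0 <= c s by move=> s sl; apply: hp; rewrite inE sl orbT.
have ha : 0 <= c a by apply: hp; rewrite mem_head.
rewrite !big_cons; case ka: (kk a); last by apply: IH.
have hr : 0 <= \sum_(s <- l | kk s) c s by rewrite big_seq_cond; apply: sumr_ge0 => s /andP[/hp'].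
have [ca0|ca0] := eqVneq (c a) 0.
  rewrite ca0 add0r => /IH [] // t [kt ht]; exists t; split => //.
  by rewrite scale0r add0r.
move=> h1; exists a; split => //.
have ca0' : 0 < c a by rewrite lt_def ca0 ha.
set S := \sum_(s <- l | kk s) c s in hr h1 *.
have cr : S = 0 by lia.
have ca1 : c a = 1 by lia.
rewrite ca1 scale1r big_seq_cond big1 ?addr0 // => s /andP[sl ks].
have : c s = 0.
  move/eqP: cr; rewrite /S big_seq_cond psumr_eq0; last by move=> s' /andP[/hp'].
  by move=> /allP /(_ s sl); rewrite sl ks => /eqP.
by move=> ->; rewrite scale0r.
Qed.

Section Main.
Variables (R : realType) (n : nat).
Notation V := 'rV[R]_n.
Implicit Types u v w x y z : V.
Variables (D Sig J : seq V) (P : V -> V) (Phi : V -> Prop).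
Hypothesis HD : is_root_system D.
Hypothesis HB : is_base D Sig.
Hypothesis HJ : {subset J <= Sig}.
Hypothesis HP : is_orth_proj_perp J P.
Hypothesis HPhi : forall x, Phi x -> qpos D Sig J P x.
Hypothesis Hco : co_closed D Sig J P Phi.

Notation comb := (comb Sig).
Notation ht := (ht Sig).
Notation nonneg := (nonneg Sig).
Notation qb := (qbase Sig J P).

Definition Phit a := a \in D /\ Phi (P a).
Definition L := zspan Phit.
Definition kL : pred V := fun s => ~~ `[< L s >].

Lemma closure_step x y cy z cz : y \in D -> y = comb cy -> nonneg cy -> ~ Phi (P y) ->
  z \in D -> z = comb cz -> nonneg cz -> ~ Phi (P z) -> x = y + z -> x \in D -> ~ Phi (P x).
Proof.
move=> yD hy py ny zD hz pz nz e xD hPx.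
have Pe : P x = P y + P z by rewrite e (P_add HP).
have [Py0|Pynz] := eqVneq (P y) 0; first by apply: nz; rewrite -(add0r (P z)) -Py0 -Pe.
have [Pz0|Pznz] := eqVneq (P z) 0; first by apply: ny; rewrite -(addr0 (P y)) -Pz0 -Pe.
have qy := qpos_P HB HJ HP yD hy py Pynz.
have qz := qpos_P HB HJ HP zD hz pz Pznz.
have [[xnz _] _] := HPhi hPx.
have qr : qroot D P (P y + P z) by split; [rewrite -Pe | exists x].
have [_ nPhi] := Hco qy ny qz nz qr.
by apply: nPhi; rewrite -Pe.
Qed.

Lemma htD Q c1 c2 : ht Q (fun t => c1 t + c2 t) = ht Q c1 + ht Q c2.
Proof. by rewrite /C.ht big_split. Qed.

Lemma claimB N : forall x c, x \in D -> x = comb c -> nonneg c ->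
  ht predT c <= N%:Z -> 1 <= ht kL c -> ~ Phi (P x).
Proof.
elim: N => [|N IH] x c xD hx hp hN h1.
  by have := ht_le kL hp; lia.
have [h2|h2] := leP 2 (ht kL c).
  have [y [cy [z [cz [[yD hy py ky] [zD hz pz kz] e]]]]] := decomp HD HB xD hx hp hN h2.
  have hce : comb c = comb (fun t => cy t + cz t) by rewrite combD -hx -hy -hz.
  have hh := ht_eq predT (comb_eq HB hce); rewrite htD in hh.
  have := ht_le kL py; have := ht_le kL pz => l1 l2.
  set Hy := ht predT cy in hh l2; set Hz := ht predT cz in hh l1.
  have hyN : Hy <= N%:Z by lia.
  have hzN : Hz <= N%:Z by lia.
  apply: (closure_step yD hy py _ zD hz pz _ e xD).
    by apply: (IH y cy).
  by apply: (IH z cz).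
have hk1 : ht kL c = 1 by lia.
move=> hPx.
have Lx : L x by apply: zspan_in.
have Lrest : L (\sum_(s <- Sig | ~~ kL s) (c s)%:~R *: s).
  rewrite -big_filter; apply: zspan_sum => s; rewrite mem_filter => /andP[ks _].
  apply: zspanZ; move: ks; rewrite /kL negbK; exact: asboolP.
have [t [kt ht]] := extract hp hk1.
have Lt : L t.
  rewrite -ht; have := zspanB Lx Lrest.
  by rewrite {1}hx /C.comb (bigID kL) /= addrK.
by move: kt; rewrite /kL => /asboolPn; apply.
Qed.

Lemma ht_ge_term (Q : pred V) c s0 : nonneg c -> s0 \in Sig -> Q s0 -> c s0 <= ht Q c.
Proof.
move=> hp sS q; rewrite /C.ht big_mkcond (bigD1_seq s0) //= ?(Sig_uniq HB) // q lerDl.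
rewrite big_seq_cond; apply: sumr_ge0 => t /andP[tS _]; case: ifP => // _; exact: hp.
Qed.

Lemma L_to_Phi s : L s -> zspan Phi (P s).
Proof.
move=> [l [hl ->]]; exists [seq (P p.1, p.2) | p <- l]; split.
  by move=> p /mapP [q ql ->] /=; have [_] := hl q ql.
by rewrite (P_sum HP) big_map; apply: eq_bigr => p _; rewrite (P_scale HP).
Qed.

Lemma supp_in t : suppset qb Phi t -> zspan Phi t.
Proof.
move=> [x Phx [tq [c' [hx ct]]]].
have [[xnz [a aD Pa]] [c'' [hx'' hp'']]] := HPhi Phx.
move: tq; rewrite /qbase => /mapP [s0]; rewrite mem_filter => /andP[s0J s0S] et; subst t.
have [c [ha [hp|hn]]] := pos_of_D HB aD; last first.
  exfalso; move/eqP: xnz; apply.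
  have e1 : x = P (comb c) by rewrite -ha.
  have m1 := coef_match HB HJ HP e1 hx''.
  rewrite e1 (P_comb Sig HP) big_seq_cond big1 // => s /andP[sS sJ].
  have e2 := m1 s sS sJ.
  have q : P s \in qb by apply/mapP; exists s; rewrite ?mem_filter ?sJ.
  have h1 := hp'' (P s) q; have h2 := hn s sS; move: h2 => /= h2.
  have -> : c s = 0 by lia.
  by rewrite scale0r.
have e1 : x = P (comb c) by rewrite -ha.
have m1 := coef_match HB HJ HP e1 hx.
have cs0 : c s0 != 0 by rewrite (m1 s0 s0S s0J).
apply: (L_to_Phi (s := s0)).
have : ~ kL s0.
  move=> ks; have hk : 1 <= ht kL c.
    have := @ht_ge_term kL c s0 hp s0S ks; have := hp s0 s0S; move: cs0.
    set u := c s0; set U := ht kL c; move=> /eqP; lia.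
  have [N hN] : exists N : nat, ht predT c <= N%:Z.
    exists `|ht predT c|%N; set U := ht predT c; lia.
  by apply: (claimB aD ha hp hN hk); rewrite Pa.
by move=> h; apply/asboolP; apply/negPn/negP.
Qed.

Lemma Phi_in x : Phi x -> zspan (suppset qb Phi) x.
Proof.
move=> Phx; have [_ [c [hx hp]]] := HPhi Phx.
exists [seq (t, c t) | t <- qb & c t != 0]; split.
  move=> p /mapP [t]; rewrite mem_filter => /andP[ct tq] -> /=.
  by exists x => //; split => //; exists c.
rewrite big_map big_filter {1}hx [RHS]big_mkcond /=; apply: eq_bigr => t _.
by have [->|] := eqVneq (c t) 0; rewrite ?mulr0z ?scale0r.
Qed.

End Main.

End I.
Import I.

Unset Implicit Arguments.
Theorem proposition2p14 (R : realType) (n : nat) (D Sig J : seq 'rV[R]_n)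
  (P : 'rV[R]_n -> 'rV[R]_n) (Phi : 'rV[R]_n -> Prop) :
  is_root_system D -> is_base D Sig ->
  {subset J <= Sig} -> (exists2 s, s \in Sig & s \notin J) ->
  is_orth_proj_perp J P ->
  (forall x, Phi x -> qpos D Sig J P x) ->
  co_closed D Sig J P Phi ->
  forall v, zspan Phi v <-> zspan (suppset (qbase Sig J P) Phi) v.
Proof.
move=> HD HB HJ _ HP HPhi Hco v; split; apply: zspan_mono.
- exact: (Phi_in HPhi).
- exact: (supp_in HD HB HJ HP HPhi Hco).
Qed.
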